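(* In Algorithm MC (with $|b_j(v)|\le\deg(v)$ for all $v,j$ and $\alpha\in(0,1/4]$), for every round $i$, $v\in V$ and $j\in[k]$: if $\tilde\phi^i_{v,j}>0$ then $r^{\le i-1}_{v,j}\ge\frac{\ln n}{\alpha}$, and if $\tilde\phi^i_{v,j}<0$ then $r^{\le i-1}_{v,j}\le-\frac{\ln n}{\alpha}$.
   Context: Let $G=(V,E)$ be a unit-capacity undirected graph, $n=|V|\ge3$, every vertex of degree $\deg(v)\ge1$, each edge with a fixed arbitrary orientation; $B\in\mathbb R^{V\times E}$ is the incidence matrix (column $(u,v)$ has $+1$ in row $u$, $-1$ in row $v$, $0$ elsewhere). Algorithm MC takes $k\ge1$, $b=(b_1,\dots,b_k)\in\mathbb R^{V\times[k]}$ with $|b_j(v)|\le\deg(v)$ for all $v,j$, $\alpha\in(0,1/4]$ and an integer $T\ge1$. Set $w^1_{v,j,+}=w^1_{v,j,-}=1$. For $i=1,\dots,T$: (1) $\tilde w^i_{v,j,\circ}=w^i_{v,j,\circ}$ if $w^i_{v,j,\circ}\ge n$ and $0$ otherwise ($\circ\in\{+,-\}$); (2) $\tilde\phi^i_{v,j}=(\tilde w^i_{v,j,+}-\tilde w^i_{v,j,-})/\deg(v)$; (3) for each edge $(u,v)$ let $j^*$ maximize $|\tilde\phi^i_{u,j}-\tilde\phi^i_{v,j}|$ over $j\in[k]$ (ties arbitrary), set $f^i_{j^*}(u,v)=+1$ if $\tilde\phi^i_{u,j^*}>\tilde\phi^i_{v,j^*}$, $-1$ if $<$, $0$ otherwise,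 and $f^i_j(u,v)=0$ for $j\ne j^*$; (4) if $\sum_{j,v}\tilde\phi^i_{v,j}b_j(v)>\sum_{j,v}\tilde\phi^i_{v,j}(Bf^i_j)_v$, terminate; (5) $r^i_{v,j}=(b_j(v)-(Bf^i_j)_v)/\deg(v)$; (6) $w^{i+1}_{v,j,+}=w^i_{v,j,+}(1+\alpha r^i_{v,j})$, $w^{i+1}_{v,j,-}=w^i_{v,j,-}(1-\alpha r^i_{v,j})$. Write $r^{\le i}_{v,j}=\sum_{i'=1}^{i}r^{i'}_{v,j}$, with $r^{\le0}_{v,j}=0$. *)

(* Defs.v *)
From HB Require Import structures.
From mathcomp Require Import all_boot all_order all_algebra.
From mathcomp Require Import reals exp.
Set Implicit Arguments. Unset Strict Implicit. Unset Printing Implicit Defensive.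
Import Order.TTheory GRing.Theory Num.Theory.
Local Open Scope ring_scope.

(* A graph is given by a finite vertex type V, a finite edge type E and the
   fixed orientation of each edge: edge e is oriented (src e, dst e). *)

Definition deg (V E : finType) (src dst : E -> V) (v : V) : nat :=
  #|[set e : E | (src e == v) || (dst e == v)]|.

(* (B g)_v for g : E -> R, B the incidence matrix:
   column (u,v) has +1 in row u and -1 in row v. *)
Definition incid (R : realType) (V E : finType) (src dst : E -> V)
  (g : E -> R) (v : V) : R :=
  \sum_(e : E) ((if src e == v then g e else 0) - (if dst e == v then g e else 0)).

Definition wtrunc (R : realType) (n : nat) (w : R) : R :=
  if n%:R <= w then w else 0.

Definition phit (R : realType) (V E : finType) (src dst : E -> V) (k : nat)
  (wp wm : nat -> V -> 'I_k -> R) (i : nat) (v : V) (j : 'I_k) : R :=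
  (wtrunc #|V| (wp i v j) - wtrunc #|V| (wm i v j)) / (deg src dst v)%:R.

(* step (3): f^i is a valid choice (ties in j^* broken arbitrarily) *)
Definition step3 (R : realType) (V E : finType) (src dst : E -> V) (k : nat)
  (phi : V -> 'I_k -> R) (fi : 'I_k -> E -> R) : Prop :=
  forall e : E, exists jstar : 'I_k,
    (forall j : 'I_k, `|phi (src e) j - phi (dst e) j|
                        <= `|phi (src e) jstar - phi (dst e) jstar|) /\
    fi jstar e = (if phi (src e) jstar > phi (dst e) jstar then 1
                  else if phi (src e) jstar < phi (dst e) jstar then -1 else 0) /\
    (forall j : 'I_k, j != jstar -> fi j e = 0).

Definition terminates (R : realType) (V E : finType) (src dst : E -> V) (k : nat)
  (b : V -> 'I_k -> R) (phi : V -> 'I_k -> R) (fi : 'I_k -> E -> R) : Prop :=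
  \sum_(j < k) \sum_(v : V) phi v j * b v j >
  \sum_(j < k) \sum_(v : V) phi v j * incid src dst (fi j) v.

Definition rr (R : realType) (V E : finType) (src dst : E -> V) (k : nat)
  (b : V -> 'I_k -> R) (f : nat -> 'I_k -> E -> R) (i : nat) (v : V) (j : 'I_k) : R :=
  (b v j - incid src dst (f i j) v) / (deg src dst v)%:R.

Definition rcum (R : realType) (V E : finType) (src dst : E -> V) (k : nat)
  (b : V -> 'I_k -> R) (f : nat -> 'I_k -> E -> R) (m : nat) (v : V) (j : 'I_k) : R :=
  \sum_(1 <= i' < m.+1) rr src dst b f i' v j.

(* (wp, wm, f) is an execution of Algorithm MC that reaches round i:
   initial weights are 1, i <= T, and every earlier round i' < i chose a valid
   flow f^{i'}, did not terminate, and updated the weights by step (6). *)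
Definition MC_run_reaches (R : realType) (V E : finType) (src dst : E -> V)
  (k : nat) (b : V -> 'I_k -> R) (alpha : R) (T : nat)
  (wp wm : nat -> V -> 'I_k -> R) (f : nat -> 'I_k -> E -> R) (i : nat) : Prop :=
  [/\ (forall v j, wp 1%N v j = 1 /\ wm 1%N v j = 1),
      (1 <= i <= T)%N &
      forall i' : nat, (1 <= i' < i)%N ->
        [/\ step3 src dst (phit src dst wp wm i') (f i'),
            ~ terminates src dst b (phit src dst wp wm i') (f i') &
            forall v j,
              wp i'.+1 v j = wp i' v j * (1 + alpha * rr src dst b f i' v j) /\
              wm i'.+1 v j = wm i' v j * (1 - alpha * rr src dst b f i' v j)]].

(* Main.v *)
Require Import Defs.
From HB Require Import structures.
From mathcomp Require Import all_boot all_order all_algebra.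
From mathcomp Require Import reals exp.
From mathcomp Require Import sequences ring lra.
Import Order.TTheory GRing.Theory Num.Theory.
Local Open Scope ring_scope.

Lemma incid_bound (R : realType) (V E : finType) (src dst : E -> V) (g : E -> R) v :
  (forall e, `|g e| <= 1) -> `|incid src dst g v| <= (deg src dst v)%:R.
Proof.
move=> Hg; rewrite /incid /deg cardE -sum1_size big_filter natr_sum.
rewrite (bigID (fun e => (src e == v) || (dst e == v))) /=.
rewrite [X in _ + X]big1; last by move=> e /norP [/negbTE -> /negbTE ->]; rewrite subr0.
rewrite addr0; apply: le_trans (ler_norm_sum _ _ _) _.
rewrite [X in _ <= X](eq_bigl (fun e => e \in [set e0 | (src e0 == v) || (dst e0 == v)])); last first.
  by move=> e; rewrite inE.
rewrite big_mkcond [X in _ <= X]big_mkcond /=; apply: ler_sum => e _.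
rewrite inE; case: (src e == v); case: (dst e == v) => //=;
  rewrite ?subr0 ?sub0r ?normrN ?subrr ?normr0 //.
Qed.

Theorem lemma2p13 (R : realType) (V E : finType) (src dst : E -> V)
  (k : nat) (b : V -> 'I_k -> R) (alpha : R) (T : nat)
  (wp wm : nat -> V -> 'I_k -> R) (f : nat -> 'I_k -> E -> R) (i : nat) :
  (3 <= #|V|)%N ->
  (forall e : E, src e != dst e) ->
  (forall v : V, (1 <= deg src dst v)%N) ->
  (1 <= k)%N ->
  (forall v j, `|b v j| <= (deg src dst v)%:R) ->
  0 < alpha -> alpha <= 1 / 4 ->
  (1 <= T)%N ->
  MC_run_reaches src dst b alpha T wp wm f i ->
  forall (v : V) (j : 'I_k),
    (0 < phit src dst wp wm i v j ->
       ln (#|V|%:R) / alpha <= rcum src dst b f i.-1 v j) /\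
    (phit src dst wp wm i v j < 0 ->
       rcum src dst b f i.-1 v j <= - (ln (#|V|%:R) / alpha)).
Proof.
move=> HV _ Hdeg _ Hb Ha Ha4 _ [Hinit /andP [Hi1 _] Hstep] v j.
have Hd : forall v, (0 : R) < (deg src dst v)%:R by move=> u; rewrite ltr0n Hdeg.
have Hr : forall i', (1 <= i' < i)%N -> `|rr src dst b f i' v j| <= 2.
  move=> i' Hi'; have [H3 _ _] := Hstep i' Hi'.
  have Hf : forall e, `|f i' j e| <= 1.
    move=> e; have [js [_ [Hjs Hoth]]] := H3 e.
    case: (eqVneq j js) => [->|/Hoth ->]; last by rewrite normr0.
    rewrite Hjs; case: ifP => _; first by rewrite normr1.
    by case: ifP => _; rewrite ?normrN ?normr1 ?normr0.
  have Hi := @incid_bound _ _ _ src dst _ v Hf.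
  rewrite /rr normrM normfV [`|(_)%:R|]ger0_norm ?ler0n // ler_pdivrMr ?Hd //.
  apply: le_trans (ler_normB _ _) _.
  by have := Hb v j; lra.
have Hind : forall m, (1 <= m <= i)%N ->
  [/\ 0 <= wp m v j, wp m v j <= expR (alpha * rcum src dst b f m.-1 v j),
      0 <= wm m v j & wm m v j <= expR (- (alpha * rcum src dst b f m.-1 v j))].
  elim=> [//|m IH] /andP [Hm1 Hmi].
  case: m IH Hm1 Hmi => [|m] IH _ Hmi.
    have [-> ->] := Hinit v j.
    by rewrite /rcum big_geq // mulr0 oppr0 expR0 ler01 lexx.
  have Hm : (1 <= m.+1 < i)%N by rewrite Hmi.
  have [_ _ Hupd] := Hstep _ Hm.
  have [Hwp Hwm] := Hupd v j.
  have [h1 h2 h3 h4] := IH (ltnW Hmi).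
  have Hrm := Hr _ Hm.
  have Hrab : -2 <= rr src dst b f m.+1 v j <= 2 by rewrite -ler_norml.
  have Hc : rcum src dst b f m.+1 v j =
      rcum src dst b f m v j + rr src dst b f m.+1 v j.
    by rewrite /rcum big_nat_recr.
  rewrite /= Hwp Hwm Hc [alpha * (_ + _)]mulrDr opprD !expRD.
  set r := rr src dst b f m.+1 v j in Hrab *.
  have Hp : 0 <= 1 + alpha * r by nra.
  have Hq : 0 <= 1 - alpha * r by nra.
  split; try exact: mulr_ge0.
    apply: ler_pM => //; exact: expR_ge1Dx.
  apply: ler_pM => //; rewrite -mulrN; exact: expR_ge1Dx.
have Hn : (0 : R) < #|V|%:R by rewrite ltr0n; apply: leq_trans HV.
have [h1 h2 h3 h4] := Hind i (introT andP (conj Hi1 (leqnn i))).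
set S := rcum src dst b f i.-1 v j in h2 h4 *.
rewrite /phit /wtrunc; split.
- rewrite pmulr_lgt0 ?invr_gt0 ?Hd // => H.
  have Hle : #|V|%:R <= wp i v j.
    case: ifP H => // _; case: ifP => _; lra.
  rewrite ler_pdivrMr // mulrC -(expRK (alpha * S)) ler_ln ?posrE ?expR_gt0 //.
  exact: (le_trans Hle h2).
- rewrite pmulr_llt0 ?invr_gt0 ?Hd // => H.
  have Hle : #|V|%:R <= wm i v j.
    case: ifP H; case: ifP => // _ _; lra.
  rewrite -mulNr ler_pdivlMr // mulrC.
  rewrite lerNr; have He := expR_gt0 (- (alpha * S)). rewrite -[X in _ <= X](expRK (- (alpha * S))). rewrite ler_ln; [exact: (le_trans Hle h4) | by rewrite posrE | by rewrite posrE].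
Qed.
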